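(* Let $\mathcal{C}$ be a d-category and $f:Y\to X$ a morphism of $\mathcal{C}$-automata such that $f$ is future open, $\bot_X\subseteq f(\bot_Y)$ and $\top_Y=f^{-1}(\top_X)$. Then $\mathrm{Lang}(Y)=\mathrm{Lang}(X)$.
   Context: A d-category is a small category $\mathcal{C}$ with wide subcategories $\mathcal{C}^+$ (formorphisms) and $\mathcal{C}^-$ (backmorphisms) such that an invertible $\varphi$ is in $\mathcal{C}^+$ iff $\varphi^{-1}\in\mathcal{C}^-$. A $\mathcal{C}$-automaton is a presheaf $X:\mathcal{C}^{op}\to\mathbf{Set}$ with sets $\bot_X,\top_X$ of start and accept elements (elements being pairs $(U,x)$, $x\in X[U]$); morphisms of automata are presheaf maps sending start elements to start elements and accept elements to accept elements. A presheaf map $f:Y\to X$ is future open if for every $\varphi\in\mathcal{C}^+(V,U)$, $y\in Y[V]$, $x\in X[U]$ with $X[\varphi](x)=f(y)$ there is $\bar y\in Y[U]$ with $Y[\varphi](\bar y)=y$ and $f(\bar y)=x$. A linear category is a bipointed d-category isomorphic to a finite (possibly empty) concatenation (gluing $\top$ to $\bot$) of $\mathbf S$ (formorphism $\bot\to\top$), $\mathbf T$ (backmorphism $\top\to\bot$), $\mathbf I$ (inverse pair); a path is a d-functor $\omega:\mathcal I\to\mathcal{C}$ from one; its track object is the automaton $\operatorname{colim}_i\mathcal{C}(-,\omega(i))$ with single start element the image of $\mathrm{id}_{\omega(\bot)}$ and single accept element the image of $\mathrm{id}_{\omega(\top)}$; track objects are automata isomorphic to such. $\mathrm{Lang}(X)$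 is the class of track objects $\Gamma$ admitting a morphism of automata $\Gamma\to X$. *)

(* Defs.v *)
From Stdlib Require Import Arith Lia List ProofIrrelevance.
Import ListNotations.

Unset Implicit Arguments.


Record Category := {
  Ob : Type;
  Hom : Ob -> Ob -> Type;
  idm : forall a, Hom a a;
  comp : forall a b d, Hom b d -> Hom a b -> Hom a d;
  comp_id_l : forall a b (f : Hom a b), comp _ _ _ (idm b) f = f;
  comp_id_r : forall a b (f : Hom a b), comp _ _ _ f (idm a) = f;
  comp_assoc : forall a b d e (f : Hom a b) (g : Hom b d) (h : Hom d e),
      comp _ _ _ h (comp _ _ _ g f) = comp _ _ _ (comp _ _ _ h g) f
}.
Arguments Hom : clear implicits.
Arguments idm {c} a.
Arguments comp {c a b d} _ _.

Definition wide_subcategory (C : Category) (P : forall a b, Hom C a b -> Prop) :=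
  (forall a, P a a (idm a)) /\
  (forall a b c (f : Hom C a b) (g : Hom C b c), P a b f -> P b c g -> P a c (comp g f)).

Record dCategory := {
  dcat :> Category;
  fwd : forall a b, Hom dcat a b -> Prop;
  bwd : forall a b, Hom dcat a b -> Prop;
  fwd_wide : wide_subcategory dcat fwd;
  bwd_wide : wide_subcategory dcat bwd;
  d_inv : forall a b (phi : Hom dcat a b) (psi : Hom dcat b a),
      comp phi psi = idm b -> comp psi phi = idm a ->
      (fwd a b phi <-> bwd b a psi)
}.
Arguments fwd {d a b} _.
Arguments bwd {d a b} _.

Record Functor (A B : Category) := {
  F_ob :> Ob A -> Ob B;
  F_hom : forall a b, Hom A a b -> Hom B (F_ob a) (F_ob b);
  F_id : forall a, F_hom a a (idm a) = idm (F_ob a);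
  F_comp : forall a b c (f : Hom A a b) (g : Hom A b c),
      F_hom a c (comp g f) = comp (F_hom b c g) (F_hom a b f)
}.
Arguments F_hom {A B} f0 {a b} _.

Record dFunctor (A B : dCategory) := {
  dfun :> Functor A B;
  dfun_fwd : forall a b (f : Hom A a b), fwd f -> fwd (F_hom dfun f);
  dfun_bwd : forall a b (f : Hom A a b), bwd f -> bwd (F_hom dfun f)
}.

Record bdCategory := {
  bdcat :> dCategory;
  bbot : Ob bdcat;
  btop : Ob bdcat
}.

(* isomorphism of bipointed d-categories: a d-functor that is bijective on
   objects and on every hom-set, reflects formorphisms and backmorphisms
   (so that its inverse is a d-functor too) and preserves the base points *)
Definition bd_iso (A B : bdCategory) (F : dFunctor A B) : Prop :=
  (forall b : Ob B, exists a : Ob A, F a = b /\ forall a', F a' = b -> a' = a) /\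
  (forall a a' (f g : Hom A a a'), F_hom F f = F_hom F g -> f = g) /\
  (forall a a' (h : Hom B (F a) (F a')), exists f : Hom A a a', F_hom F f = h) /\
  (forall a a' (f : Hom A a a'), fwd (F_hom F f) -> fwd f) /\
  (forall a a' (f : Hom A a a'), bwd (F_hom F f) -> bwd f) /\
  F (bbot A) = bbot B /\ F (btop A) = btop B.

Arguments bd_iso {A B} F.

Inductive piece := pS | pT | pI.

(* In the concatenation of the word w (objects 0..length w, piece number m
   glued between m and m+1) there is a (unique) morphism i -> j iff one can
   walk forward along pieces S or I, or backward along pieces T or I. *)
Definition reach (w : list piece) (i j : nat) : Prop :=
  (i <= j /\ forall m, i <= m < j -> nth m w pS <> pT) \/
  (j <= i /\ forall m, j <= m < i -> nth m w pS <> pS).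

Lemma reach_refl w i : reach w i i.
Proof. left; split; [lia | intros m Hm; lia]. Qed.

Lemma reach_trans w i j k : reach w i j -> reach w j k -> reach w i k.
Proof.
  intros [[H1 F1]|[H1 B1]] [[H2 F2]|[H2 B2]].
  - left; split; [lia|]; intros m Hm.
    destruct (Nat.lt_ge_cases m j); [apply F1|apply F2]; lia.
  - destruct (Nat.le_gt_cases i k).
    + left; split; [lia|]; intros m Hm; apply F1; lia.
    + right; split; [lia|]; intros m Hm; apply B2; lia.
  - destruct (Nat.le_gt_cases i k).
    + left; split; [lia|]; intros m Hm; apply F2; lia.
    + right; split; [lia|]; intros m Hm; apply B1; lia.
  - right; split; [lia|]; intros m Hm.
    destruct (Nat.lt_ge_cases m j); [apply B2|apply B1]; lia.
Qed.

Arguments reach_trans {w i j k} _ _.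

Definition LOb (w : list piece) := { k : nat | k <= length w }.

Definition LCat (w : list piece) : Category.
Proof.
  refine {| Ob := LOb w;
            Hom := fun a b => reach w (proj1_sig a) (proj1_sig b);
            idm := fun a => reach_refl w (proj1_sig a);
            comp := fun a b c g f => reach_trans f g |}.
  all: intros; apply proof_irrelevance.
Defined.

Definition LdCat (w : list piece) : dCategory.
Proof.
  refine {| dcat := LCat w;
            fwd := fun a b _ => proj1_sig a <= proj1_sig b;
            bwd := fun a b _ => proj1_sig b <= proj1_sig a |}.
  - split; simpl; intros; lia.
  - split; simpl; intros; lia.
  - intros; simpl; tauto.
Defined.

Definition Lin (w : list piece) : bdCategory :=
  {| bdcat := LdCat w;
     bbot := exist (fun k => k <= length w) 0 (Nat.le_0_l _);
     btop := exist (fun k => k <= length w) (length w) (le_n _) |}.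

Definition is_linear (I : bdCategory) : Prop :=
  exists (w : list piece) (F : dFunctor I (Lin w)), bd_iso F.

Record Presheaf (C : Category) := {
  ps_ob :> Ob C -> Type;
  ps_act : forall U V, Hom C V U -> ps_ob U -> ps_ob V;
  ps_id : forall U (x : ps_ob U), ps_act U U (idm U) x = x;
  ps_comp : forall U V W (phi : Hom C V U) (psi : Hom C W V) (x : ps_ob U),
      ps_act U W (comp phi psi) x = ps_act V W psi (ps_act U V phi x)
}.
Arguments ps_act {C} p {U V} _ _.

Arguments ps_ob {C} p _.

Record PshMap (C : Category) (Y X : Presheaf C) := {
  pm :> forall U, Y U -> X U;
  pm_nat : forall U V (phi : Hom C V U) (y : Y U),
      pm V (ps_act Y phi y) = ps_act X phi (pm U y)
}.
Arguments pm {C Y X} _ U _.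

Record Automaton (C : Category) := {
  aut_psh :> Presheaf C;
  start : forall U, ps_ob aut_psh U -> Prop;
  accept : forall U, ps_ob aut_psh U -> Prop
}.
Arguments start {C} a U _.
Arguments accept {C} a U _.

Arguments PshMap {C} Y X.

Record AutMorphism (C : Category) (Y X : Automaton C) := {
  am :> PshMap Y X;
  am_start : forall U y, start Y U y -> start X U (am U y);
  am_accept : forall U y, accept Y U y -> accept X U (am U y)
}.

Arguments AutMorphism {C} Y X.

Arguments am {C Y X} _.

Definition future_open (C : dCategory) (Y X : Presheaf C) (f : PshMap Y X) : Prop :=
  forall U V (phi : Hom C V U), fwd phi ->
  forall (y : Y V) (x : X U), ps_act X phi x = f V y ->
  exists ybar : Y U, ps_act Y phi ybar = y /\ f U ybar = x.

Arguments future_open {C Y X} f.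

(* a cocone from the diagram  i |-> C(-, omega i)  into Z *)
Definition is_cocone (C I : Category) (om : Functor I C) (Z : Presheaf C)
  (mu : forall i U, Hom C U (om i) -> Z U) : Prop :=
  (forall i U V (g : Hom C U (om i)) (phi : Hom C V U),
      mu i V (comp g phi) = ps_act Z phi (mu i U g)) /\
  (forall i j (alpha : Hom I i j) U (g : Hom C U (om i)),
      mu j U (comp (F_hom om alpha) g) = mu i U g).

Arguments is_cocone {C I} om Z mu.

Definition is_colimit (C I : Category) (om : Functor I C) (G : Presheaf C)
  (lam : forall i U, Hom C U (om i) -> G U) : Prop :=
  is_cocone om G lam /\
  forall (Z : Presheaf C) (mu : forall i U, Hom C U (om i) -> Z U),
    is_cocone om Z mu ->
    exists h : PshMap G Z,
      (forall i U g, h U (lam i U g) = mu i U g) /\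
      (forall h' : PshMap G Z, (forall i U g, h' U (lam i U g) = mu i U g) ->
         forall U x, h' U x = h U x).

Arguments is_colimit {C I} om G lam.

Definition is_track_object (C : dCategory) (G : Automaton C) : Prop :=
  exists (I : bdCategory) (om : dFunctor I C)
         (lam : forall i U, Hom C U (om i) -> G U),
    is_linear I /\
    is_colimit om G lam /\
    (forall U (x : G U), start G U x <->
       existT (fun U => G U) U x =
       existT (fun U => G U) (om (bbot I)) (lam (bbot I) _ (idm (om (bbot I))))) /\
    (forall U (x : G U), accept G U x <->
       existT (fun U => G U) U x =
       existT (fun U => G U) (om (btop I)) (lam (btop I) _ (idm (om (btop I))))).

Arguments is_track_object {C} G.

Definition in_Lang (C : dCategory) (G X : Automaton C) : Prop :=
  is_track_object G /\ inhabited (AutMorphism G X).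

Arguments in_Lang {C} G X.

(* Main.v *)
Require Import Defs.
From Stdlib Require Import Arith Lia List ProofIrrelevance IndefiniteDescription Classical.
Import ListNotations.

Definition pcomp {C : Category} {A B D : Presheaf C} (g : PshMap B D) (h : PshMap A B) : PshMap A D.
Proof.
  refine {| pm := fun U a => pm g U (pm h U a) |}.
  intros; rewrite !pm_nat; reflexivity.
Defined.

Section Lift.
Variable C : dCategory.
Variables Y X : Automaton C.
Variable f : AutMorphism Y X.
Hypothesis Hopen : future_open f.
Hypothesis Hstart : forall U (x : X U), start X U x ->
              exists y : Y U, start Y U y /\ f U y = x.
Variable G : Automaton C.
Variable I : bdCategory.
Variable om : dFunctor I C.
Variable lam : forall i U, Hom C U (om i) -> G U.
Variable w : list piece.
Variable F : dFunctor I (Lin w).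
Hypothesis Hiso : bd_iso F.
Hypothesis Hcol : is_colimit om G lam.
Hypothesis Hst : forall U (x : G U), start G U x <->
       existT (fun U => G U) U x =
       existT (fun U => G U) (om (bbot I)) (lam (bbot I) _ (idm (om (bbot I)))).
Variable gX : AutMorphism G X.

Definition nF (i : Ob I) : nat := proj1_sig (F i).
Definition xx (i : Ob I) : X (om i) := pm (am gX) _ (lam i (om i) (idm (om i))).

Lemma xcompat i j (alpha : Hom I i j) : ps_act X (F_hom om alpha) (xx j) = xx i.
Proof.
  unfold xx. rewrite <- pm_nat.
  destruct Hcol as [[H1 H2] _].
  rewrite <- H1. rewrite comp_id_l.
  rewrite <- (comp_id_r _ _ _ (F_hom om alpha)).
  rewrite H2. reflexivity.
Qed.

Lemma hom_unique a b (u v : Hom I a b) : u = v.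
Proof.
  destruct Hiso as [_ [Hinj _]]. apply Hinj.
  change (@eq (reach w (nF a) (nF b)) (F_hom F u) (F_hom F v)). apply proof_irrelevance.
Qed.

Lemma lob_eq (p q : LOb w) : proj1_sig p = proj1_sig q -> p = q.
Proof. destruct p as [p1 p2], q as [q1 q2]; simpl; intros H; subst q1; f_equal; apply proof_irrelevance. Qed.

Lemma obj_inj a b : nF a = nF b -> a = b.
Proof.
  intro H. destruct Hiso as [Hs _].
  destruct (Hs (F a)) as [c [_ Hc]].
  rewrite (Hc a eq_refl). symmetry. apply Hc. apply lob_eq. symmetry. exact H.
Qed.

Lemma hom_of_reach a b : reach w (nF a) (nF b) -> exists u : Hom I a b, True.
Proof.
  intro R. destruct Hiso as [_ [_ [Hfull _]]].
  destruct (Hfull a b R) as [u _]. exists u; trivial.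
Qed.

Lemma reach_of_hom a b (u : Hom I a b) : reach w (nF a) (nF b).
Proof. exact (F_hom F u). Qed.

Definition ob (b : LOb w) : Ob I :=
  proj1_sig (constructive_indefinite_description _ (proj1 Hiso b)).

Lemma nF_ob b : nF (ob b) = proj1_sig b.
Proof.
  unfold nF, ob.
  destruct (proj2_sig (constructive_indefinite_description _ (proj1 Hiso b))) as [Ha _].
  rewrite Ha. reflexivity.
Qed.

Definition L := length w.
Definition obn (k : nat) : Ob I :=
  ob (exist (fun k => k <= length w) (Nat.min k L) (Nat.le_min_r k L)).

Lemma nF_obn k : nF (obn k) = Nat.min k L.
Proof. unfold obn. rewrite nF_ob. reflexivity. Qed.

Lemma nF_le i : nF i <= L.
Proof. unfold nF, L. exact (proj2_sig (F i)). Qed.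

Definition Adj a b (y : Y (om a)) (y' : Y (om b)) :=
  (forall u : Hom I a b, ps_act Y (F_hom om u) y' = y) /\
  (forall u : Hom I b a, ps_act Y (F_hom om u) y = y').

Lemma step_gen a b : (nF b = nF a \/ nF b = S (nF a)) ->
  forall y : Y (om a), pm (am f) _ y = xx a ->
  exists y' : Y (om b), pm (am f) _ y' = xx b /\ Adj a b y y'.
Proof.
  intros [E|E] y Hy.
  - assert (a = b) by (apply obj_inj; lia). subst b.
    exists y. split; [exact Hy|]. split; intro u; rewrite (hom_unique _ _ u (idm a));
      rewrite F_id; apply ps_id.
  - destruct (nth (nF a) w pS) eqn:Hp.
    + assert (R : reach w (nF a) (nF b)).
      { left. split; [lia|]. intros m Hm. assert (m = nF a) by lia. subst m.
        rewrite Hp. discriminate. }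
      destruct (hom_of_reach _ _ R) as [u _].
      assert (Fu : fwd u).
      { destruct Hiso as [_ [_ [_ [Hf _]]]]. apply Hf. change (nF a <= nF b). lia. }
      pose proof (dfun_fwd _ _ om _ _ u Fu) as Fu'.
      destruct (Hopen _ _ (F_hom om u) Fu' y (xx b)) as [yb [Hyb1 Hyb2]].
      { rewrite xcompat. symmetry. exact Hy. }
      exists yb. split; [exact Hyb2|]. split.
      * intro u'. rewrite (hom_unique _ _ u' u). exact Hyb1.
      * intro v. exfalso. pose proof (reach_of_hom _ _ v) as R'.
        destruct R' as [[? _]|[_ B]]; [lia|]. apply (B (nF a)); [lia|exact Hp].
    + assert (R : reach w (nF b) (nF a)).
      { right. split; [lia|]. intros m Hm. assert (m = nF a) by lia. subst m.
        rewrite Hp. discriminate. }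
      destruct (hom_of_reach _ _ R) as [v _].
      exists (ps_act Y (F_hom om v) y). split.
      * rewrite pm_nat, Hy. apply xcompat.
      * split.
        -- intro u. rewrite <- ps_comp, <- F_comp.
           rewrite (hom_unique _ _ (comp v u) (idm a)), F_id. apply ps_id.
        -- intro v'. rewrite (hom_unique _ _ v' v). reflexivity.
    + assert (R : reach w (nF b) (nF a)).
      { right. split; [lia|]. intros m Hm. assert (m = nF a) by lia. subst m.
        rewrite Hp. discriminate. }
      destruct (hom_of_reach _ _ R) as [v _].
      exists (ps_act Y (F_hom om v) y). split.
      * rewrite pm_nat, Hy. apply xcompat.
      * split.
        -- intro u. rewrite <- ps_comp, <- F_comp.
           rewrite (hom_unique _ _ (comp v u) (idm a)), F_id. apply ps_id.
        -- intro v'. rewrite (hom_unique _ _ v' v). reflexivity.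
Qed.

Definition P k (y : Y (om (obn k))) : Prop :=
  pm (am f) _ y = xx (obn k) /\ (k = 0 -> start Y _ y).

Lemma obn0 : obn 0 = bbot I.
Proof.
  apply obj_inj. rewrite nF_obn. destruct Hiso as [_ [_ [_ [_ [_ [Hb _]]]]]].
  unfold nF. rewrite Hb. reflexivity.
Qed.

Lemma base_ex : exists y, P 0 y.
Proof.
  assert (S0 : start X _ (xx (obn 0))).
  { rewrite obn0. unfold xx. apply (am_start _ _ _ gX). apply Hst. reflexivity. }
  destruct (Hstart _ _ S0) as [y [Hy1 Hy2]].
  exists y. split; auto.
Qed.

Lemma step_ex k (y : Y (om (obn k))) : P k y ->
  exists y', P (S k) y' /\ Adj (obn k) (obn (S k)) y y'.
Proof.
  intros [Hy _].
  destruct (step_gen (obn k) (obn (S k))) with (y := y) as [y' [H1 H2]]; auto.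
  { rewrite !nF_obn. lia. }
  exists y'. split; [split; [exact H1|discriminate]|exact H2].
Qed.

Definition stepf k (s : {y | P k y}) :
  {y' | P (S k) y' /\ Adj (obn k) (obn (S k)) (proj1_sig s) y'} :=
  constructive_indefinite_description _ (step_ex k (proj1_sig s) (proj2_sig s)).

Fixpoint ys (k : nat) : {y | P k y} :=
  match k with
  | 0 => constructive_indefinite_description _ base_ex
  | S k' => let s := stepf k' (ys k') in
            exist _ (proj1_sig s) (proj1 (proj2_sig s))
  end.

Lemma ys_adj k : Adj (obn k) (obn (S k)) (proj1_sig (ys k)) (proj1_sig (ys (S k))).
Proof. exact (proj2 (proj2_sig (stepf k (ys k)))). Qed.

Lemma core d : forall k l, l = k + d -> l <= L ->
  (forall u : Hom I (obn k) (obn l), ps_act Y (F_hom om u) (proj1_sig (ys l)) = proj1_sig (ys k)) /\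
  (forall u : Hom I (obn l) (obn k), ps_act Y (F_hom om u) (proj1_sig (ys k)) = proj1_sig (ys l)).
Proof.
  induction d as [|d IH]; intros k l El Hl.
  - assert (l = k) by lia. clear El. subst l.
    split; intro u; rewrite (hom_unique _ _ u (idm _)), F_id; apply ps_id.
  - assert (Nk : nF (obn k) = k) by (rewrite nF_obn; lia).
    assert (Nk1 : nF (obn (S k)) = S k) by (rewrite nF_obn; lia).
    assert (Nl : nF (obn l) = l) by (rewrite nF_obn; lia).
    destruct (IH (S k) l ltac:(lia) Hl) as [IH1 IH2].
    destruct (ys_adj k) as [A1 A2].
    split; intro u; pose proof (reach_of_hom _ _ u) as R; rewrite Nk, Nl in R.
    + destruct R as [[_ Fw]|[? _]]; [|lia].
      destruct (hom_of_reach (obn k) (obn (S k))) as [u1 _].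
      { rewrite Nk, Nk1. left. split; [lia|]. intros m Hm. apply Fw; lia. }
      destruct (hom_of_reach (obn (S k)) (obn l)) as [u2 _].
      { rewrite Nl, Nk1. left. split; [lia|]. intros m Hm. apply Fw; lia. }
      rewrite (hom_unique _ _ u (comp u2 u1)), F_comp, ps_comp, IH1. apply A1.
    + destruct R as [[? _]|[_ Bw]]; [lia|].
      destruct (hom_of_reach (obn (S k)) (obn k)) as [v1 _].
      { rewrite Nk, Nk1. right. split; [lia|]. intros m Hm. apply Bw; lia. }
      destruct (hom_of_reach (obn l) (obn (S k))) as [v2 _].
      { rewrite Nl, Nk1. right. split; [lia|]. intros m Hm. apply Bw; lia. }
      rewrite (hom_unique _ _ u (comp v1 v2)), F_comp, ps_comp, A2. apply IH2.
Qed.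

Lemma core2 k l (u : Hom I (obn k) (obn l)) : k <= L -> l <= L ->
  ps_act Y (F_hom om u) (proj1_sig (ys l)) = proj1_sig (ys k).
Proof.
  intros Hk Hl. destruct (Nat.le_ge_cases k l).
  - apply (proj1 (core (l - k) k l ltac:(lia) Hl)).
  - apply (proj2 (core (k - l) l k ltac:(lia) Hk)).
Qed.

Lemma iso_ex i : exists u : Hom I i (obn (nF i)), True.
Proof.
  apply hom_of_reach. rewrite nF_obn. rewrite Nat.min_l by apply nF_le.
  apply reach_refl.
Qed.

Definition isoh i : Hom I i (obn (nF i)) :=
  proj1_sig (constructive_indefinite_description _ (iso_ex i)).

Definition yfun i : Y (om i) := ps_act Y (F_hom om (isoh i)) (proj1_sig (ys (nF i))).

Lemma yfun_compat i j (alpha : Hom I i j) : ps_act Y (F_hom om alpha) (yfun j) = yfun i.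
Proof.
  unfold yfun. rewrite <- ps_comp, <- F_comp.
  destruct (hom_of_reach (obn (nF i)) (obn (nF j))) as [g _].
  { rewrite !nF_obn, !Nat.min_l by apply nF_le. apply (reach_of_hom _ _ alpha). }
  rewrite (hom_unique _ _ (comp (isoh j) alpha) (comp g (isoh i))), F_comp, ps_comp.
  rewrite core2 by apply nF_le. reflexivity.
Qed.

Lemma yfun_f i : pm (am f) _ (yfun i) = xx i.
Proof.
  unfold yfun. rewrite pm_nat. rewrite (proj1 (proj2_sig (ys (nF i)))). apply xcompat.
Qed.

Lemma yfun_start i : nF i = 0 -> start Y _ (yfun i).
Proof.
  intro H0. unfold yfun. generalize (isoh i). rewrite H0. intro u.
  assert (E : obn 0 = i) by (apply obj_inj; rewrite nF_obn; lia).
  subst i. rewrite (hom_unique _ _ u (idm _)), F_id, ps_id.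
  apply (proj2 (proj2_sig (ys 0))). reflexivity.
Qed.

Definition mu i U (g : Hom C U (om i)) : Y U := ps_act Y g (yfun i).

Lemma mu_cocone : is_cocone om Y mu.
Proof.
  split.
  - intros. unfold mu. apply ps_comp.
  - intros. unfold mu. rewrite ps_comp, yfun_compat. reflexivity.
Qed.

Lemma lift_exists : exists h : PshMap G Y,
  (forall U z, pm (am f) U (pm h U z) = pm (am gX) U z) /\
  (forall U z, start G U z -> start Y U (pm h U z)).
Proof.
  destruct Hcol as [Hcoc Huniv].
  destruct (Huniv Y mu mu_cocone) as [h [Hh _]].
  exists h.
  assert (Cg : is_cocone om X (fun i U g => pm (am gX) U (lam i U g))).
  { split.
    - intros. rewrite (proj1 Hcoc), pm_nat. reflexivity.
    - intros. rewrite (proj2 Hcoc). reflexivity. }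
  destruct (Huniv X _ Cg) as [k [_ Hk]].
  assert (Hfh : forall U z, pm (am f) U (pm h U z) = pm (am gX) U z).
  { intros U z.
    transitivity (pm k U z).
    2: symmetry; apply (Hk (am gX)); auto.
    change (pm (pcomp (am f) h) U z = pm k U z).
    apply Hk.
    intros i U' g. simpl. rewrite Hh. unfold mu. rewrite pm_nat, yfun_f.
    unfold xx. rewrite <- pm_nat, <- (proj1 Hcoc), comp_id_l. reflexivity. }
  split; [exact Hfh|].
  intros U z Hz. apply Hst in Hz.
  change ((fun s : {U : Ob C & G U} => start Y (projT1 s) (pm h _ (projT2 s)))
            (existT (fun U => G U) U z)).
  rewrite Hz. simpl. rewrite Hh. unfold mu. rewrite ps_id.
  apply yfun_start. destruct Hiso as [_ [_ [_ [_ [_ [Hb _]]]]]].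
  unfold nF. rewrite Hb. reflexivity.
Qed.

End Lift.

Theorem proposition12 (C : dCategory) (Y X : Automaton C) (f : AutMorphism Y X)
  (Hopen : future_open f)
  (Hstart : forall U (x : X U), start X U x ->
              exists y : Y U, start Y U y /\ f U y = x)
  (Haccept : forall U (y : Y U), accept Y U y <-> accept X U (f U y)) :
  forall G : Automaton C, in_Lang G Y <-> in_Lang G X.
Proof.
  intro G. split.
  - intros [Ht [h]]. split; [exact Ht|]. constructor.
    refine {| am := pcomp (am f) (am h) |}.
    + intros U y Hy. simpl. apply am_start, am_start, Hy.
    + intros U y Hy. simpl. apply am_accept, am_accept, Hy.
  - intros [Ht [gX]]. split; [exact Ht|].
    destruct Ht as (I & om & lam & [w [F Hiso]] & Hcol & Hst & Hacc).
    destruct (lift_exists C Y X f Hopen Hstart G I om lam w F Hiso Hcol Hst gX)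
      as [h [Hfh Hs]].
    constructor. refine {| am := h |}.
    + exact Hs.
    + intros U z Hz. apply Haccept. rewrite Hfh. apply am_accept. exact Hz.
Qed.
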